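(* Let $d$ be a symmetric nonnegative function on a set $\mathcal X$ with $d(x,z)\le M(d(x,y)+d(y,z))$ for all $x,y,z\in\mathcal X$. Let $\mathcal S\subset\mathcal X$ be finite, $\mathcal C_{\mathrm{OPT}}\subset\mathcal X$ a set of $K$ centers minimizing $\sum_{x\in\mathcal S}\min_{c\in\mathcal C}d(x,c)^2$, and let $A\subseteq\mathcal S$ be one cluster of the partition of $\mathcal S$ induced by $\mathcal C_{\mathrm{OPT}}$ (points sharing the same nearest optimal center). Let $\mathcal C$ be an arbitrary set of centers, $D(a)=\min_{c\in\mathcal C}d(a,c)$, and define $\Upsilon(A)=\sum_{a\in A}\min_{c\in\mathcal C}d(a,c)^2$ and $\Upsilon_{\mathrm{OPT}}(A)=\sum_{a\in A}\min_{c\in\mathcal C_{\mathrm{OPT}}}d(a,c)^2$. If a random center $a_0\in A$ is added to $\mathcal C$, chosen with probability $D(a_0)^2/\sum_{a\in A}D(a)^2$, then, with $\Upsilon(A)$ computed for the enlarged center set, $\mathbb E[\Upsilon(A)]\le16M^4\,\Upsilon_{\mathrm{OPT}}(A)$. *)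

(* Defs.v *)
From mathcomp Require Import all_boot all_order all_algebra.
From mathcomp Require Import reals.
Set Implicit Arguments. Unset Strict Implicit. Unset Printing Implicit Defensive.
Import Order.TTheory GRing.Theory Num.Theory.
Local Open Scope ring_scope.

(* minsq d C x = min_{c in C} d(x,c)^2, for a nonempty finite center list C
   (returns 0 on the empty list, which is never used). *)
Definition minsq {X : Type} {R : realType} (d : X -> X -> R) (C : seq X) (x : X) : R :=
  match C with
  | [::] => 0
  | c :: C' => foldr (fun c' m => Num.min (d x c' ^+ 2) m) (d x c ^+ 2) C'
  end.

Definition Upsilon {X : Type} {R : realType} (d : X -> X -> R) (C A : seq X) : R :=
  \sum_(a <- A) minsq d C a.

(* Main.v *)
Require Import Defs.
From mathcomp Require Import all_boot all_order all_algebra.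
From mathcomp Require Import reals.
From mathcomp Require Import ring lra.
Import Order.TTheory GRing.Theory Num.Theory.
Local Open Scope ring_scope.

Section Helpers.
Variables (R : realType) (X : eqType).

Lemma foldr_min_le (g : X -> R) v L :
  foldr (fun c m => Num.min (g c) m) v L <= v /\
  forall c, c \in L -> foldr (fun c m => Num.min (g c) m) v L <= g c.
Proof.
elim: L => [|a L [IH1 IH2]] /=; first by split=> //.
split; first by rewrite ge_min IH1 orbT.
move=> c; rewrite in_cons => /orP [/eqP->|cL]; first by rewrite ge_min lexx.
by rewrite ge_min IH2 ?orbT.
Qed.

Lemma foldr_min_attain (g : X -> R) v L :
  foldr (fun c m => Num.min (g c) m) v L = v \/
  exists2 c, c \in L & foldr (fun c m => Num.min (g c) m) v L = g c.
Proof.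
elim: L => [|a L IH] /=; first by left.
rewrite minEle; case: ifP => _.
  by right; exists a => //; rewrite mem_head.
case: IH => [->|[c cL ->]]; first by left.
by right; exists c => //; rewrite in_cons cL orbT.
Qed.

Lemma minsq_le (d : X -> X -> R) L x c : c \in L -> minsq d L x <= d x c ^+ 2.
Proof.
case: L => [//|a L] /=; rewrite in_cons => /orP [/eqP->|cL].
  by case: (foldr_min_le (fun c' => d x c' ^+ 2) (d x a ^+ 2) L).
by case: (foldr_min_le (fun c' => d x c' ^+ 2) (d x a ^+ 2) L) => _; apply.
Qed.

Lemma minsq_attain (d : X -> X -> R) L x : L != [::] ->
  exists2 c, c \in L & minsq d L x = d x c ^+ 2.
Proof.
case: L => [//|a L] _ /=.
case: (foldr_min_attain (fun c' => d x c' ^+ 2) (d x a ^+ 2) L) => [->|[c cL ->]].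
  by exists a; rewrite ?mem_head.
by exists c; rewrite // in_cons cL orbT.
Qed.

Lemma eqleW (x y : R) : x = y -> x <= y. Proof. by move->. Qed.
End Helpers.
Arguments eqleW {R x y}.
Arguments minsq_attain {R X} d {L} x _.
Arguments minsq_le {R X d L x c} _.

Theorem lemma3 (R : realType) (X : eqType) (d : X -> X -> R) (M : R)
  (d_ge0 : forall x y, 0 <= d x y)
  (d_sym : forall x y, d x y = d y x)
  (d_qtri : forall x y z, d x z <= M * (d x y + d y z))
  (S : seq X) (S_uniq : uniq S)
  (K : nat) (K_gt0 : (0 < K)%N)
  (Copt : seq X) (Copt_uniq : uniq Copt) (Copt_size : size Copt = K)
  (Copt_opt : forall C' : seq X, uniq C' -> size C' = K ->
      Upsilon d Copt S <= Upsilon d C' S)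
  (f : X -> X)
  (f_in : forall x, x \in S -> f x \in Copt)
  (f_near : forall x c, x \in S -> c \in Copt -> d x (f x) <= d x c)
  (c0 : X) (c0_in : c0 \in Copt)
  (A : seq X) (A_def : A = [seq x <- S | f x == c0])
  (C : seq X) (C_ne : C != [::])
  (hpos : 0 < Upsilon d C A) :
  \sum_(a0 <- A) (minsq d C a0 / Upsilon d C A) * Upsilon d (a0 :: C) A
    <= 16 * M ^+ 4 * Upsilon d Copt A.
Proof.
set Phi := Upsilon d C A.
pose e x y := d x y ^+ 2.
pose D x := minsq d C x.
have e_ge0 x y : 0 <= e x y by rewrite /e sqr_ge0.
have D_ge0 x : 0 <= D x.
  by case: (minsq_attain d x C_ne) => c _; rewrite /D => ->; apply: sqr_ge0.
have M2_ge0 : 0 <= M ^+ 2 by apply: sqr_ge0.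
have qtri2 x y z : e x z <= 2 * M ^+ 2 * (e x y + e y z).
  have h := d_qtri x y z; have h1 := d_ge0 x z; have h2 := d_ge0 x y;
  have h3 := d_ge0 y z.
  rewrite /e.
  have hs : d x z ^+ 2 <= (M * (d x y + d y z)) ^+ 2.
    by rewrite ler_sqr // ?nnegrE //; apply: le_trans h.
  apply: (le_trans hs); rewrite exprMn.
  have : (d x y + d y z) ^+ 2 <= 2 * (d x y ^+ 2 + d y z ^+ 2).
    have := sqr_ge0 (d x y - d y z); rewrite !expr2; lra.
  move=> H; apply: le_trans (ler_wpM2l M2_ge0 H) _; apply: eqleW; ring.
have m_le1 a0 a : minsq d (a0 :: C) a <= e a a0 by apply: minsq_le; rewrite mem_head.
have m_le2 a0 a : minsq d (a0 :: C) a <= D a.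
  rewrite /D; case: (minsq_attain d a C_ne) => c cC ->.
  by apply: minsq_le; rewrite in_cons cC orbT.
have m_ge0 a0 a : 0 <= minsq d (a0 :: C) a.
  by case: (minsq_attain d a (isT : a0 :: C != [::])) => c _ ->; apply: sqr_ge0.
have Dbound a0 a : D a0 <= 2 * M ^+ 2 * (e a0 a + D a).
  case: (minsq_attain d a C_ne) => c cC Dac.
  rewrite [D a]Dac; apply: le_trans (qtri2 a0 a c).
  by apply: minsq_le.
have opt_ge a : a \in A -> e a c0 <= minsq d Copt a.
  rewrite A_def mem_filter => /andP [/eqP fa aS].
  have Cne : Copt != [::] by apply/eqP => E0; rewrite E0 in c0_in.
  case: (minsq_attain d a Cne) => c cC ->.
  rewrite /e ler_sqr ?nnegrE //; rewrite -fa; exact: f_near.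
pose N : R := \sum_(a <- A) 1.
have N_gt0 : 0 < N.
  move: hpos; rewrite /Phi /Upsilon /N; case: (A) => [|x A'].
    by rewrite big_nil ltxx.
  move=> _; rewrite big_cons; apply: (@lt_le_trans _ _ 1) => //.
  rewrite lerDl; apply: sumr_ge0 => *; exact: ler01.
pose P a0 := \sum_(a <- A) e a0 a.
pose Q a0 := \sum_(a <- A) e a a0.
pose U a0 := Upsilon d (a0 :: C) A.
have U_ge0 a0 : 0 <= U a0 by apply: sumr_ge0.
have U_leQ a0 : U a0 <= Q a0 by apply: ler_sum => a _; apply: m_le1.
have U_lePhi a0 : U a0 <= Phi by apply: ler_sum => a _; apply: m_le2.
have P_ge0 a0 : 0 <= P a0 by apply: sumr_ge0.
have NDbound a0 : N * D a0 <= 2 * M ^+ 2 * (P a0 + Phi).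
  rewrite /N mulr_suml /P /Phi /Upsilon -big_split mulr_sumr /=.
  apply: ler_sum => a _; rewrite mul1r; exact: Dbound.
have term a0 : N * (D a0 / Phi * U a0) <= 2 * M ^+ 2 * (Q a0 + P a0).
  have Phi0 : Phi != 0 by rewrite gt_eqF.
  set t := U a0 / Phi.
  have t_ge0 : 0 <= t by rewrite /t divr_ge0 // ltW.
  have t_le1 : t <= 1 by rewrite /t ler_pdivrMr // mul1r.
  have Ut : U a0 = t * Phi by rewrite /t divfK.
  have -> : N * (D a0 / Phi * U a0) = (N * D a0) * t by rewrite /t; field.
  apply: (le_trans (ler_wpM2r t_ge0 (NDbound a0))).
  have h1 : (P a0 + Phi) * t <= P a0 + U a0.
    rewrite Ut; have hP := P_ge0 a0; have hPhi := ltW hpos; nra.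
  rewrite -[2 * M ^+ 2 * (P a0 + Phi) * t]mulrA; apply: ler_wpM2l; first by apply: mulr_ge0.
  apply: (le_trans h1); rewrite addrC lerD2r; exact: U_leQ.
pose T := \sum_(a0 <- A) P a0.
have QP : \sum_(a0 <- A) Q a0 = T.
  rewrite /T /Q /P exchange_big /=; apply: eq_bigr => a0 _; apply: eq_bigr => a _.
  by rewrite /e d_sym.
pose O := \sum_(a <- A) e a c0.
have O_le : O <= Upsilon d Copt A.
  by rewrite /O /Upsilon big_seq_cond [leRHS]big_seq_cond; apply: ler_sum => a /andP [aA _]; apply: opt_ge.
have O_ge0 : 0 <= O by apply: sumr_ge0.
have T_le : T <= 4 * M ^+ 2 * N * O.
  have : T <= \sum_(a0 <- A) \sum_(a <- A) (2 * M ^+ 2 * (e a0 c0 + e a c0)).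
    apply: ler_sum => a0 _; apply: ler_sum => a _.
    rewrite [e a c0]/e d_sym; exact: qtri2.
  move/le_trans; apply.
  have -> : \sum_(a0 <- A) \sum_(a <- A) (2 * M ^+ 2 * (e a0 c0 + e a c0))
      = 2 * M ^+ 2 * (\sum_(a0 <- A) (e a0 c0 * N + O)).
    rewrite mulr_sumr; apply: eq_bigr => a0 _.
    rewrite -mulr_sumr big_split /= /N /O mulr_sumr; congr (_ * (_ + _)).
    by apply: eq_bigr => *; rewrite mulr1.
  rewrite big_split /= -mulr_suml -/O.
  have -> : \sum_(a0 <- A) O = N * O by rewrite /N mulr_suml; apply: eq_bigr => *; rewrite mul1r.
  apply: eqleW; ring.
have NE : N * (\sum_(a0 <- A) (D a0 / Phi * U a0)) <= 4 * M ^+ 2 * T.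
  rewrite mulr_sumr.
  apply: le_trans (ler_sum _ (fun a0 _ => term a0)) _.
  rewrite -mulr_sumr big_split /= QP; rewrite -/T; apply: eqleW; ring.
have fin : N * (\sum_(a0 <- A) (D a0 / Phi * U a0)) <= N * (16 * M ^+ 4 * Upsilon d Copt A).
  apply: (le_trans NE).
  have h2 : 4 * M ^+ 2 * T <= 4 * M ^+ 2 * (4 * M ^+ 2 * N * O).
    by apply: ler_wpM2l => //; apply: mulr_ge0.
  apply: (le_trans h2).
  have -> : 4 * M ^+ 2 * (4 * M ^+ 2 * N * O) = N * (16 * M ^+ 4 * O) by ring.
  apply: ler_wpM2l; first exact: ltW.
  apply: ler_wpM2l => //; apply: mulr_ge0 => //; rewrite exprn_even_ge0 //.
by move: fin; rewrite ler_pM2l.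
Qed.
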